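(* Fix a prime $p>3$ and an integer $n\ge 2$, and write the base-$p$ expansion $n=\sum_{i=1}^k a_ip^{b_i}$ with $0<a_i\le p-1$ and $0\le b_1<\cdots<b_k$. Then $\prod_{i=1}^k a_i!\,p^{b_i}\le ((p-1)!)^{(n-1)/(p-2)}$. Furthermore, if $a_i=1$ for all $i$, then $\prod_{i=1}^k a_i!\,p^{b_i}\le \tfrac12((p-1)!)^{(n-1)/(p-2)}$. *)

(* Defs.v *)
From mathcomp Require Import all_boot.
From Stdlib Require Import Reals.

Definition fact_bound (p n : nat) : R :=
  Rpower (INR (p.-1)`!) ((INR n - 1) / (INR p - 2))%R.

(* Main.v *)
Require Import Defs.
From mathcomp Require Import all_boot.
From Stdlib Require Import Lia.
From mathcomp Require Import zify.


Lemma bern p b : 0 < p -> 1 + b * (p - 1) <= p ^ b.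
Proof.
move=> p0; elim: b => [|b IH]; first by rewrite expn0 mul0n.
rewrite expnS. have : 1 <= p ^ b by rewrite expn_gt0 p0.
move: IH; set X := p ^ b => IH H1. nia.
Qed.

Lemma factle c : c.+1`! <= c.+2 ^ c.
Proof.
elim: c => [|c IH]; first by [].
rewrite factS expnS. apply: leq_mul => //.
apply: leq_trans IH _. case: c => [|c] //.
by rewrite leq_exp2r.
Qed.

Lemma lexp2r m n e : m <= n -> m ^ e <= n ^ e.
Proof. case: e => [|e] H; first by rewrite !expn0. by rewrite leq_exp2r. Qed.

Lemma factm a d : a`! * a.+1 ^ d <= (a + d)`!.
Proof.
elim: d => [|d IH]; first by rewrite expn0 muln1 addn0.
rewrite addnS factS expnS mulnCA. apply: leq_mul => //. lia.
Qed.

Lemma T1 a m : 0 < a -> a <= m -> a`! ^ m.-1 <= m`! ^ a.-1.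
Proof.
move=> a0 am. have -> : m = a + (m - a) by lia.
set d := m - a.
apply: (@leq_trans ((a`! * a.+1 ^ d) ^ a.-1)); last by apply: lexp2r; apply: factm.
rewrite expnMn.
have -> : (a + d).-1 = a.-1 + d by lia.
rewrite expnD; apply: leq_mul => //.
rewrite -expnM mulnC expnM.
apply: lexp2r. case: a a0 {am d} => [|c] //= _. exact: factle.
Qed.

Lemma p_le_F p : 3 < p -> p <= (p.-1)`!.
Proof.
move=> hp. have -> : p = (p - 4).+4 by lia.
set q := p - 4. rewrite /= !factS. have := fact_gt0 q. nia.
Qed.

Lemma two_le_F m : 2 ^ m <= m.+1`!.
Proof.
elim: m => [|m IH] //. rewrite expnS factS. apply: leq_mul => //.
Qed.

Lemma term p a b : 3 < p -> 0 < a <= p.-1 ->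
  (a`! * p ^ b) ^ (p - 2) <= (p.-1)`! ^ (a * p ^ b - 1).
Proof.
move=> hp /andP [a0 ap].
have F0 := fact_gt0 p.-1. have pF := @p_le_F p hp.
have h1 : a`! ^ (p - 2) <= (p.-1)`! ^ (a - 1).
  have := @T1 a p.-1 a0 ap.
  have -> : (p.-1).-1 = p - 2 by lia.
  by have -> : a.-1 = a - 1 by lia.
have h2 : (p ^ b) ^ (p - 2) <= (p.-1)`! ^ (a * (p ^ b - 1)).
  rewrite -expnM. apply: (leq_trans (@lexp2r _ _ (b * (p - 2)) pF)). apply: leq_pexp2l => //.
  have := @bern p b (ltnW (ltnW (ltnW hp))). nia.
rewrite expnMn. apply: (leq_trans (leq_mul h1 h2)). rewrite -expnD.
apply: leq_pexp2l => //. have : 0 < p ^ b by rewrite expn_gt0; lia. nia.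
Qed.

Lemma term2 p b : 3 < p -> 0 < b ->
  (2 * p ^ b) ^ (p - 2) <= (p.-1)`! ^ (p ^ b - 1).
Proof.
move=> hp b0.
have F0 := fact_gt0 p.-1. have pF := @p_le_F p hp.
have h1 : 2 ^ (p - 2) <= (p.-1)`! ^ 1.
  rewrite expn1. have := two_le_F (p - 2). by have -> : (p - 2).+1 = p.-1 by lia.
have h2 : (p ^ b) ^ (p - 2) <= (p.-1)`! ^ (b * (p - 2)).
  rewrite -expnM. exact: lexp2r.
rewrite expnMn. apply: (leq_trans (leq_mul h1 h2)). rewrite -expnD.
apply: leq_pexp2l => //. have := @bern p b (ltnW (ltnW (ltnW hp))). nia.
Qed.

Lemma prod_expn k (F : 'I_k -> nat) e :
  (\prod_(i < k) F i) ^ e = \prod_(i < k) F i ^ e.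
Proof.
elim/big_rec2: _ => [|i x y _ IH]; first by rewrite exp1n.
by rewrite expnMn IH.
Qed.

Lemma natpart p n k (a b : nat -> nat) :
  3 < p ->
  (forall i, i < k -> 0 < a i <= p.-1) ->
  n = \sum_(i < k) a i * p ^ b i ->
  (\prod_(i < k) ((a i)`! * p ^ b i)) ^ (p - 2) <= (p.-1)`! ^ (n - k).
Proof.
move=> hp ha ->.
rewrite prod_expn.
apply: (@leq_trans (\prod_(i < k) (p.-1)`! ^ (a i * p ^ b i - 1))).
  apply: leq_prod => i _. apply: term => //. exact: ha.
rewrite -expn_sum. apply: leq_pexp2l; first exact: fact_gt0.
have E : \sum_(i < k) a i * p ^ b i = \sum_(i < k) (a i * p ^ b i - 1) + k.
  rewrite -[X in _ + X]card_ord -sum1_card -big_split /=.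
  apply: eq_bigr => i _.
  have := ha i (ltn_ord i). have : 0 < p ^ b i by rewrite expn_gt0; lia. nia.
by rewrite E addnK.
Qed.

Lemma powE m e : Nat.pow m e = expn m e.
Proof. elim: e => [|e IH] //=. by rewrite expnS IH multE. Qed.

From Stdlib Require Import Reals.
From Stdlib Require Import Lra Psatz.

Lemma INR_expn m e : INR (expn m e) = (INR m ^ e)%R.
Proof.
elim: e => [|e IH]; first by rewrite expn0.
by rewrite expnS -multE mult_INR IH.
Qed.

Lemma pow_lt_strict (x y : R) e : (0 <= y)%R -> (y < x)%R -> (y ^ e.+1 < x ^ e.+1)%R.
Proof.
move=> y0 yx. elim: e => [|e IH]; first by rewrite /= !Rmult_1_r.
have -> : (y ^ e.+2 = y * y ^ e.+1)%R by [].
have -> : (x ^ e.+2 = x * x ^ e.+1)%R by [].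
have : (0 <= y ^ e.+1)%R by apply: pow_le.
move: IH. set X := (x ^ e.+1)%R. set Y := (y ^ e.+1)%R. move=> IH hY.
have h1 : (0 < x * (X - Y))%R by apply: Rmult_lt_0_compat; lra.
have h2 : (0 <= Y * (x - y))%R by apply: Rmult_le_pos; lra.
nra.
Qed.

Lemma root_le (x y : R) e : 0 < e -> (0 <= x)%R -> (0 <= y)%R ->
  (x ^ e <= y ^ e)%R -> (x <= y)%R.
Proof.
case: e => [|e] // _ x0 y0 H. destruct (Rle_lt_dec x y) as [h|h] => //.
have := @pow_lt_strict x y e y0 h. lra.
Qed.

Lemma fb_pow p n : 3 < p -> 1 <= n ->
  (fact_bound p n ^ (p - 2))%R = INR (expn (p.-1)`! (n - 1)).
Proof.
move=> hp hn.
have F0 : (0 < INR (p.-1)`!)%R by apply: lt_0_INR; apply/ltP; exact: fact_gt0.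
rewrite -Rpower_pow; last by rewrite /fact_bound /Rpower; apply: exp_pos.
rewrite /fact_bound Rpower_mult INR_expn -Rpower_pow //.
congr Rpower.
rewrite subnE minus_INR; last by apply/leP; lia.
rewrite minus_INR; last by apply/leP; lia.
have hp' : (INR p - INR 2 <> 0)%R.
  have : (4 <= INR p)%R by replace 4%R with (INR 4) by (simpl; lra); apply: le_INR; apply/leP.
  simpl; lra.
have E2 : INR 2 = 2%R by simpl; lra. have E1 : INR 1 = 1%R by []. rewrite ?E2 ?E1 in hp' *. field. exact: hp'.
Qed.

Theorem lemma6p1 (p n k : nat) (a b : nat -> nat) :
  prime p -> 3 < p -> 2 <= n ->
  (forall i, i < k -> 0 < a i <= p.-1) ->
  (forall i j, i < j -> j < k -> b i < b j) ->
  n = \sum_(i < k) a i * p ^ b i ->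
  (INR (\prod_(i < k) ((a i)`! * p ^ b i)) <= fact_bound p n)%R /\
  ((forall i, i < k -> a i = 1) ->
     (INR (\prod_(i < k) ((a i)`! * p ^ b i)) <= / 2 * fact_bound p n)%R).
Proof.
move=> _ hp hn ha _ hsum.
have EP : \prod_(i < k) ((a i)`! * Nat.pow p (b i)) = \prod_(i < k) ((a i)`! * expn p (b i)).
  by apply: eq_bigr => i _; rewrite powE.
rewrite EP; clear EP.
have {}hsum : n = \sum_(i < k) a i * expn p (b i).
  by rewrite hsum; apply: eq_bigr => i _; rewrite powE.
have hnat := @natpart p n k a b hp ha hsum.
set P := \prod_(i < k) ((a i)`! * expn p (b i)) in hnat *.
set F := (p.-1)`! in hnat *.
have F0 : 0 < F by exact: fact_gt0.
have k0 : 0 < k.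
  rewrite lt0n; apply/eqP => k0. move: hsum; rewrite k0 big_ord0 => hs.
  by rewrite hs in hn.
have e0 : 0 < p - 2 by lia.
have fbpos : (0 <= fact_bound p n)%R by rewrite /fact_bound /Rpower; apply: Rlt_le; apply: exp_pos.
have key : forall Q : nat, expn Q (p - 2) <= expn F (n - 1) -> (INR Q <= fact_bound p n)%R.
  move=> Q HQ. apply: (@root_le _ _ (p - 2) e0); [exact: pos_INR | exact: fbpos |].
  rewrite fb_pow //; last by lia. rewrite -INR_expn. apply: le_INR. exact/leP.
split.
  apply: key. apply: (leq_trans hnat). apply: leq_pexp2l => //. lia.
move=> a1.
suff : (INR (2 * P) <= fact_bound p n)%R.
  rewrite -multE mult_INR /=. lra.
apply: key. rewrite expnMn.
have [k1|k2] := eqVneq k 1.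
- subst k. rewrite /P big_ord1. rewrite big_ord1 a1 // mul1n in hsum.
  rewrite a1 //. have -> : 1`! = 1 by []. rewrite mul1n -expnMn hsum.
  apply: term2 => //. move: hn; rewrite hsum; case: (b ord0) => //.
- have h2 : expn 2 (p - 2) <= F.
    have := two_le_F (p - 2). by have -> : (p - 2).+1 = p.-1 by lia.
  apply: (leq_trans (leq_mul h2 hnat)). rewrite -{1}(expn1 F) -expnD.
  apply: leq_pexp2l => //.
  have : k <= n.
    rewrite hsum. rewrite -[X in X <= _](card_ord k) -sum1_card. apply: leq_sum => i _.
    have := ha i (ltn_ord i). have : 0 < expn p (b i) by rewrite expn_gt0; lia. nia.
  lia.
Qed.
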